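(* Let $\vec r_1,\vec r_2$ be in the closed unit ball of $\mathbb{R}^3$, both orthogonal to $(0,0,1)$, with $r_i=|\vec r_i|$. Then $$d^2_{z,2}(\rho(\vec r_1),\rho(\vec r_2))=\sqrt{1-\min(r_1,r_2)^2}-\sqrt{1-\max(r_1,r_2)^2}.$$
   Context: Qubit setting: $\mathcal{H}=\mathbb{C}^2$, $\mathcal{H}^*$ is identified with $\mathbb{C}^2$ via the dual basis, and $A^T$ is the usual matrix transpose; operators on $\mathcal{H}\otimes\mathcal{H}^*$ are $4\times4$ matrices in the basis $e_1\otimes e_1^*,e_1\otimes e_2^*,e_2\otimes e_1^*,e_2\otimes e_2^*$. $\sigma_x=\begin{pmatrix}0&1\\1&0\end{pmatrix}$, $\sigma_y=\begin{pmatrix}0&-i\\i&0\end{pmatrix}$, $\sigma_z=\begin{pmatrix}1&0\\0&-1\end{pmatrix}$, $\vec\sigma=(\sigma_x,\sigma_y,\sigma_z)$, and $\rho(\vec r)=\tfrac12(I+\vec r\cdot\vec\sigma)$ for $|\vec r|\le1$. The set of couplings of states $\rho,\omega$ is $\mathcal{C}(\rho,\omega)=\{\Pi\in\mathcal{S}(\mathcal{H}\otimes\mathcal{H}^* ):\mathrm{tr}_{\mathcal{H}^*}[\Pi]=\omega,\ \mathrm{tr}_{\mathcal{H}}[\Pi]=\rho^T\}$. $C_{z,2}=(\sigma_z\otimes I^T-I\otimes\sigma_z^T)^2=\mathrm{diag}(0,4,4,0)$, $D^2_{z,2}(\rho,\omega)=\min_{\Pi\in\mathcal{C}(\rho,\omega)}\mathrm{tr}[\Pi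 C_{z,2}]$, and $d_{z,2}(\rho,\omega)=\big(D^2_{z,2}(\rho,\omega)-\tfrac12(D^2_{z,2}(\rho,\rho)+D^2_{z,2}(\omega,\omega))\big)^{1/2}$. *)

(* Defs.v *)
From HB Require Import structures.
From mathcomp Require Import all_boot all_order all_algebra.
From mathcomp Require Import complex.
From mathcomp Require Import boolp classical_sets reals.
Set Implicit Arguments. Unset Strict Implicit. Unset Printing Implicit Defensive.
Import Order.TTheory GRing.Theory Num.Theory.
Local Open Scope ring_scope.
Local Open Scope complex_scope.

Section Qubit.
Variable R : realType.
Local Notation C := R[i].

Definition adj m n (A : 'M[C]_(m, n)) : 'M[C]_(n, m) :=
  (map_mx (fun z => z^*) A)^T.

Definition psd n (A : 'M[C]_n) : Prop :=
  A = adj A /\ forall v : 'cV[C]_n, 0 <= (adj v *m A *m v) 0 0.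

Definition is_state n (A : 'M[C]_n) : Prop := psd A /\ \tr A = 1.

(* basis of H (x) H^* : e_i (x) e_j^* has index 2 i + j,
   i.e. ordering e1e1*, e1e2*, e2e1*, e2e2* *)
Definition tidx (i j : 'I_2) : 'I_4 := inord (2 * i + j).

Definition ptr_Hdual (P : 'M[C]_4) : 'M[C]_2 :=
  \matrix_(i, i') \sum_(j < 2) P (tidx i j) (tidx i' j).
Definition ptr_H (P : 'M[C]_4) : 'M[C]_2 :=
  \matrix_(j, j') \sum_(i < 2) P (tidx i j) (tidx i j').

Definition coupling (rho omega : 'M[C]_2) (P : 'M[C]_4) : Prop :=
  is_state P /\ ptr_Hdual P = omega /\ ptr_H P = rho^T.

Definition Cz2 : 'M[C]_4 :=
  \matrix_(a, b) (if a == b then (if (val a == 1)%N || (val a == 2)%N then 4 else 0) else 0).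

(* D^2_{z,2}(rho, omega) = min over couplings of tr[P C_{z,2}]
   (the trace is real for Hermitian P; the minimum is attained,
    so it coincides with the infimum taken here) *)
Definition D2z (rho omega : 'M[C]_2) : R :=
  inf [set x : R | exists P : 'M[C]_4,
         coupling rho omega P /\ \tr (P *m Cz2) = x%:C].

Definition dz2 (rho omega : 'M[C]_2) : R :=
  Num.sqrt (D2z rho omega - (D2z rho rho + D2z omega omega) / 2).

Definition sigx : 'M[C]_2 := \matrix_(a, b) (if a == b then 0 else 1).
Definition sigy : 'M[C]_2 :=
  \matrix_(a, b) (if a == b then 0 else if val a == 0%N then - 'i else 'i).
Definition sigz : 'M[C]_2 :=
  \matrix_(a, b) (if a == b then (if val a == 0%N then 1 else -1) else 0).

Definition cx (r : 'rV[R]_3) : R := r 0 (inord 0).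
Definition cy (r : 'rV[R]_3) : R := r 0 (inord 1).
Definition cz (r : 'rV[R]_3) : R := r 0 (inord 2).
Definition dot3 (u v : 'rV[R]_3) : R := \sum_(i < 3) u 0 i * v 0 i.
Definition norm3 (r : 'rV[R]_3) : R := Num.sqrt (dot3 r r).
Definition ez : 'rV[R]_3 := \row_(i < 3) (if val i == 2%N then 1 else 0).

Definition bloch (r : 'rV[R]_3) : 'M[C]_2 :=
  (1 / 2) *: (1%:M + (cx r)%:C *: sigx + (cy r)%:C *: sigy + (cz r)%:C *: sigz).
End Qubit.

(* Main.v *)
Require Import Defs.
From HB Require Import structures.
From mathcomp Require Import all_boot all_order all_algebra.
From mathcomp Require Import complex.
From mathcomp Require Import boolp classical_sets reals.
From mathcomp Require Import ring lra.
Import Order.TTheory GRing.Theory Num.Theory.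
Local Open Scope ring_scope.

Module Aux.
Local Open Scope complex_scope.

Section H.
Variable R : realType.
Local Notation C := R[i].
Local Notation Re := complex.Re.
Local Notation Im := complex.Im.

Lemma sum2 (T : nmodType) (F : 'I_2 -> T) : \sum_(i<2) F i = F (inord 0) + F (inord 1).
Proof.
rewrite !big_ord_recr big_ord0 /= add0r; congr (_ + _); congr F; apply/val_inj; by rewrite /= inordK.
Qed.
Lemma sum3 (T : nmodType) (F : 'I_3 -> T) : \sum_(i<3) F i = F (inord 0) + F (inord 1) + F (inord 2).
Proof.
rewrite !big_ord_recr big_ord0 /= add0r; congr (_ + _ + _); congr F; apply/val_inj; by rewrite /= inordK.
Qed.
Lemma sum4 (T : nmodType) (F : 'I_4 -> T) : \sum_(i<4) F i = F (inord 0) + F (inord 1) + F (inord 2) + F (inord 3).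
Proof.
rewrite !big_ord_recr big_ord0 /= add0r; congr (_ + _ + _ + _); congr F; apply/val_inj; by rewrite /= inordK.
Qed.

Lemma tidxE (a b : nat) : (a < 2)%N -> (b < 2)%N -> tidx (inord a) (inord b) = inord (2 * a + b).
Proof. by move=> ha hb; rewrite /tidx !inordK. Qed.

Lemma ReD (x y : C) : Re (x + y) = Re x + Re y. Proof. by case: x => a b; case: y => c d. Qed.
Lemma ImD (x y : C) : Im (x + y) = Im x + Im y. Proof. by case: x => a b; case: y => c d. Qed.

Lemma mulJ (z : C) : z * z^* = ((Re z)^+2 + (Im z)^+2)%:C.
Proof. case: z => a b /=; simpc; apply/eqP; rewrite eq_complex /=; apply/andP; split; apply/eqP; ring. Qed.

Lemma trE (A : 'M[C]_4) : \tr A = A (inord 0) (inord 0) + A (inord 1) (inord 1) + A (inord 2) (inord 2) + A (inord 3) (inord 3).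
Proof. by rewrite /mxtrace sum4. Qed.

End H.

Local Open Scope complex_scope.

Section B.
Variable R : realType.
Local Notation C := R[i].
Local Notation Re := complex.Re.
Local Notation Im := complex.Im.

Lemma half_C : (1 / 2 : C) = (1/2 : R)%:C.
Proof. by rewrite rmorphM rmorph1 fmorphV rmorph_nat. Qed.

Lemma blochE (r : 'rV[R]_3) (i j : nat) : (i < 2)%N -> (j < 2)%N ->
  bloch r (inord i) (inord j) =
  if i == j then (if i == 0%N then (1 + cz r) / 2 else (1 - cz r)/2) +i* 0
  else if i == 0%N then (cx r / 2) +i* (- cy r / 2) else (cx r / 2) +i* (cy r / 2).
Proof.
move=> hi hj; rewrite /bloch !mxE -val_eqE /= !inordK // half_C.
case: i hi => [|[|//]] _; case: j hj => [|[|//]] _ /=; simpc; apply/eqP; rewrite eq_complex /=; apply/andP; split; apply/eqP; simpc.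
all: try ring.
Qed.

Lemma cjN (z : C) : conjc (- z) = - conjc z. Proof. by case: z => a b; simpc. Qed.
Lemma cjD (z w : C) : conjc (z + w) = conjc z + conjc w. Proof. exact: rmorphD. Qed.
Lemma cjM (z w : C) : conjc (z * w) = conjc z * conjc w. Proof. exact: rmorphM. Qed.

Lemma herm (P : 'M[C]_4) : psd P -> forall i j, P j i = (P i j)^*.
Proof. by case=> HP _ i j; rewrite {1}HP /adj !mxE. Qed.

Lemma qf (P : 'M[C]_4) (g : 'I_4 -> C) : psd P -> 0 <= \sum_(i<4) \sum_(j<4) (conjc (g i)) * P i j * g j.
Proof.
case=> _ Hq; have := Hq (\col_i g i); rewrite !mxE.
congr (0 <= _); rewrite exchange_big /=; apply: eq_bigr => j _.
rewrite !mxE mulr_suml; apply: eq_bigr => i _; by rewrite /adj !mxE.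
Qed.

Lemma ge0C (z : C) : 0 <= z -> z = (Re z)%:C /\ 0 <= Re z.
Proof. case: z => a b; rewrite lecE /= => /andP[/eqP -> ha]; split => //; rewrite complexr0. Qed.

Lemma sum_two (F : 'I_4 -> C) (k l : 'I_4) : k != l ->
  (forall i, i != k -> i != l -> F i = 0) ->
  \sum_(j<4) F j = F k + F l.
Proof.
move=> kl gz; rewrite (bigD1 k) //= (bigD1 l) /=; last by rewrite eq_sym.
rewrite big1 ?addr0 ?addrA // => i /andP[ik il]; by rewrite gz.
Qed.

Lemma qf2 (P : 'M[C]_4) (g : 'I_4 -> C) (k l : 'I_4) : k != l ->
  (forall i, i != k -> i != l -> g i = 0) ->
  \sum_(i<4) \sum_(j<4) (conjc (g i)) * P i j * g j =
   (conjc (g k)) * P k k * g k + (conjc (g k)) * P k l * g l + ((conjc (g l)) * P l k * g k + (conjc (g l)) * P l l * g l).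
Proof.
move=> kl gz.
have inn : forall i, \sum_(j<4) (conjc (g i)) * P i j * g j = (conjc (g i)) * P i k * g k + (conjc (g i)) * P i l * g l.
  by move=> i; apply: sum_two => // j jk jl /=; rewrite (gz j) // mulr0.
under eq_bigr do rewrite inn.
by rewrite (sum_two _ _ _ kl) // => i ik il /=; rewrite (gz i) // raddf0 !mul0r add0r.
Qed.
Lemma diagP (P : 'M[C]_4) (k l : 'I_4) : psd P -> k != l ->
  P k k = (Re (P k k))%:C /\ 0 <= Re (P k k).
Proof.
move=> HP kl; apply: ge0C.
have := @qf P (fun i => if i == k then 1 else 0) HP.
rewrite (qf2 _ _ _ _ kl); last by move=> i /negPf -> .
rewrite eqxx (eq_sym l k) (negPf kl).
by rewrite raddf0 !mulr0 !mul0r !addr0 rmorph1 mul1r mulr1.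
Qed.

Lemma real_minor (dk dl c : R) : 0 <= dk -> 0 <= dl -> 0 <= c ->
  (forall x, 0 <= x ^+ 2 * dk - x * c - x * c + c * dl) -> c <= dk * dl.
Proof.
move=> hk hl hc H.
have [dl0|dlp] := eqVneq dl 0.
  subst dl; rewrite mulr0.
  have [dk0|dkp] := eqVneq dk 0.
    subst dk; have := H 1; nra.
  have := H (c / dk); set x := c / dk => h.
  have hx : x * dk = c by rewrite /x mulfVK.
  have x0 : 0 <= x by rewrite /x divr_ge0.
  have : x * c <= 0 by nra.
  nra.
have dlp' : 0 < dl by rewrite lt0r dlp.
have := H dl; nra.
Qed.
Lemma minorP (P : 'M[C]_4) (k l : 'I_4) : psd P -> k != l ->
  Re (P k l) ^+ 2 + Im (P k l) ^+ 2 <= Re (P k k) * Re (P l l).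
Proof.
move=> HP kl.
have lk : l != k by rewrite eq_sym.
have [Ek gk] := diagP P k l HP kl.
have [El gl] := diagP P l k HP lk.
apply: real_minor => //; first by rewrite addr_ge0 // sqr_ge0.
move=> x.
have := @qf P (fun i => if i == k then x%:C else if i == l then - P l k else 0) HP.
rewrite (qf2 _ _ _ _ kl); last by move=> i /negPf -> /negPf ->.
rewrite eqxx (negPf lk) eqxx.
rewrite (herm P HP k l) cjN conjcK conjc_real.
set w := P k l.
have -> : x%:C * P k k * x%:C + x%:C * w * - w^* + (- w * w^* * x%:C + - w * P l l * - w^*)
   = x%:C ^+ 2 * P k k - x%:C * (w * w^*) - x%:C * (w * w^*) + (w * w^*) * P l l by ring.
move=> h; rewrite Ek El mulJ -!rmorphXn -!rmorphM -!rmorphB -!rmorphD ler0c in h.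
exact: h.
Qed.
Lemma t00 : tidx (inord 0) (inord 0) = inord 0. Proof. by rewrite tidxE. Qed.
Lemma t01 : tidx (inord 0) (inord 1) = inord 1. Proof. by rewrite tidxE. Qed.
Lemma t10 : tidx (inord 1) (inord 0) = inord 2. Proof. by rewrite tidxE. Qed.
Lemma t11 : tidx (inord 1) (inord 1) = inord 3. Proof. by rewrite tidxE. Qed.

Lemma real_lb (d0 d1 d2 d3 u1 v1 u2 v2 a b x : R) :
 d0 + d1 = 1/2 -> d2 + d3 = 1/2 -> d0 + d2 = 1/2 -> d1 + d3 = 1/2 ->
 u1 + u2 = a/2 -> v1 + v2 = b/2 ->
 u1^+2 + v1^+2 <= d0 * d2 -> u2^+2 + v2^+2 <= d1 * d3 -> x = 4 * (d1 + d2) ->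
 a^+2 + b^+2 <= 1 ->
 2 - 2 * Num.sqrt (1 - (a^+2 + b^+2)) <= x.
Proof.
move=> e1 e2 e3 e4 ea eb m1 m2 ex hab.
set S := Num.sqrt _.
have S0 : 0 <= S by rewrite sqrtr_ge0.
have S2 : S ^+ 2 = 1 - (a^+2 + b^+2) by rewrite sqr_sqrtr // subr_ge0.
have hd2 : d2 = d1 by lra.
have hd0 : d0 = 1/2 - d1 by lra.
have hd3 : d3 = 1/2 - d1 by lra.
have ha : a = 2 * (u1 + u2) by lra.
have hb : b = 2 * (v1 + v2) by lra.
have key : a^+2 + b^+2 <= 16 * d1 * (1/2 - d1).
  rewrite ha hb; rewrite hd0 hd2 in m1; rewrite hd3 in m2.
  have h1 := sqr_ge0 (u1 - u2); have h2 := sqr_ge0 (v1 - v2).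
  have : (2 * (u1 + u2)) ^+ 2 + (2 * (v1 + v2)) ^+ 2 = 8 * (u1^+2 + v1^+2 + (u2^+2 + v2^+2)) - 4 * ((u1 - u2)^+2 + (v1 - v2)^+2) by ring.
  move=> ->; nra.
have : (1 - 4 * d1) ^+ 2 <= S ^+ 2 by rewrite S2; nra.
move=> h; rewrite ex; nra.
Qed.
Lemma neq_ord (a b : nat) : (a < 4)%N -> (b < 4)%N -> a != b -> (inord a : 'I_4) != inord b.
Proof. by move=> ha hb ab; rewrite -val_eqE /= !inordK. Qed.

Lemma costE (P : 'M[C]_4) : \tr (P *m Cz2 R) = 4 * P (inord 1) (inord 1) + 4 * P (inord 2) (inord 2).
Proof.
rewrite trE !mxE !sum4 !mxE -!val_eqE /= !inordK //=; ring.
Qed.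

Lemma natC (n : nat) : (n%:R : R)%:C = n%:R :> C.
Proof. exact: (rmorph_nat (real_complex R)). Qed.

Lemma trE2 (A : 'M[C]_2) i j : A^T i j = A j i. Proof. by rewrite mxE. Qed.

Lemma lb (r1 r2 : 'rV[R]_3) (P : 'M[C]_4) (x : R) : cz r1 = 0 -> cz r2 = 0 ->
  coupling (bloch r1) (bloch r2) P -> \tr (P *m Cz2 R) = x%:C ->
  cx r1 ^+ 2 + cy r1 ^+ 2 <= 1 -> cx r2 ^+ 2 + cy r2 ^+ 2 <= 1 ->
  2 - 2 * Num.sqrt (1 - (cx r1 ^+ 2 + cy r1 ^+ 2)) <= x /\
  2 - 2 * Num.sqrt (1 - (cx r2 ^+ 2 + cy r2 ^+ 2)) <= x.
Proof.
move=> z1 z2 [[HP _] [H1 H2]] Hx n1 n2.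
pose p (i j : nat) := P (inord i) (inord j).
have e00 : p 0%N 0%N + p 1%N 1%N = bloch r2 (inord 0) (inord 0) by rewrite -H1 /ptr_Hdual mxE sum2 t00 t01.
have e11 : p 2%N 2%N + p 3%N 3%N = bloch r2 (inord 1) (inord 1) by rewrite -H1 /ptr_Hdual mxE sum2 t10 t11.
have e01 : p 0%N 2%N + p 1%N 3%N = bloch r2 (inord 0) (inord 1) by rewrite -H1 /ptr_Hdual mxE sum2 t00 t01 t10 t11.
have f00 : p 0%N 0%N + p 2%N 2%N = bloch r1 (inord 0) (inord 0) by rewrite -trE2 -H2 /ptr_H mxE sum2 t00 t10.
have f11 : p 1%N 1%N + p 3%N 3%N = bloch r1 (inord 1) (inord 1) by rewrite -trE2 -H2 /ptr_H mxE sum2 t01 t11.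
have f01 : p 0%N 1%N + p 2%N 3%N = bloch r1 (inord 1) (inord 0) by rewrite -trE2 -H2 /ptr_H mxE sum2 t00 t01 t10 t11.
rewrite !blochE //= in e00 e11 e01 f00 f11 f01.
have [E0 g0] := diagP P (inord 0) (inord 1) HP (neq_ord 0 1 isT isT isT).
have [E1 g1] := diagP P (inord 1) (inord 0) HP (neq_ord 1 0 isT isT isT).
have [E2 g2] := diagP P (inord 2) (inord 0) HP (neq_ord 2 0 isT isT isT).
have [E3 g3] := diagP P (inord 3) (inord 0) HP (neq_ord 3 0 isT isT isT).
have m02 := minorP P (inord 0) (inord 2) HP (neq_ord 0 2 isT isT isT).
have m13 := minorP P (inord 1) (inord 3) HP (neq_ord 1 3 isT isT isT).
have m01 := minorP P (inord 0) (inord 1) HP (neq_ord 0 1 isT isT isT).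
have m23 := minorP P (inord 2) (inord 3) HP (neq_ord 2 3 isT isT isT).
rewrite costE -!natC {1}E1 {1}E2 -!rmorphM -rmorphD in Hx.
have Hx' : x = 4 * (Re (p 1%N 1%N) + Re (p 2%N 2%N)) by move: Hx => [<-]; rewrite mulrDr.
have R1 := congr1 (@complex.Re R) e00; have R2 := congr1 (@complex.Re R) e11; have R3 := congr1 (@complex.Re R) e01; have R4 := congr1 (@complex.Im R) e01.
have R5 := congr1 (@complex.Re R) f00; have R6 := congr1 (@complex.Re R) f11; have R7 := congr1 (@complex.Re R) f01; have R8 := congr1 (@complex.Im R) f01.
rewrite !ReD ?ImD /= in R1 R2 R3 R4 R5 R6 R7 R8.
rewrite z1 z2 ?addr0 ?subr0 in R1 R2 R5 R6.
unfold p in *.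
have d12 : Re (P (inord 1) (inord 1)) = Re (P (inord 2) (inord 2)) by lra.
split.
  apply: (real_lb _ _ _ _ _ _ _ _ _ _ _ R1 R2 R5 R6 R7 R8) => //.
    by rewrite -d12.
  by rewrite d12.
rewrite -[cy r2 ^+ 2]sqrrN.
have R4' : Im (P (inord 0) (inord 2)) + Im (P (inord 1) (inord 3)) = (- cy r2) / 2 by rewrite R4 mulNr.
apply: (real_lb _ _ _ _ _ _ _ _ _ _ _ R1 R2 R5 R6 R3 R4') => //.
by rewrite sqrrN.
Qed.
End B.

Local Open Scope complex_scope.

Section U.
Variable R : realType.
Local Notation C := R[i].
Local Notation Re := complex.Re.
Local Notation Im := complex.Im.

Definition gP (p q : R) (A B : C) (i j : nat) : C :=
  let P := p%:C in let Q := q%:C in let Ac := conjc A in let Bc := conjc B in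
  match i, j with
  | 0, 0 => P * P | 0, 1 => P * Q * Ac | 0, 2 => P * Q * Bc | 0, 3 => P * P * Ac * Bc
  | 1, 0 => P * Q * A | 1, 1 => Q * Q | 1, 2 => Q * Q * A * Bc | 1, 3 => P * Q * Bc
  | 2, 0 => P * Q * B | 2, 1 => Q * Q * Ac * B | 2, 2 => Q * Q | 2, 3 => P * Q * Ac
  | 3, 0 => P * P * A * B | 3, 1 => P * Q * B | 3, 2 => P * Q * A | 3, 3 => P * P
  | _, _ => 0 end.

Definition Pi p q A B : 'M[C]_4 := \matrix_(i, j) gP p q A B i j.

Lemma qfE (P : 'M[C]_4) (v : 'cV[C]_4) :
  (adj v *m P *m v) 0 0 = \sum_(i<4) \sum_(j<4) conjc (v i 0) * P i j * v j 0.
Proof.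
rewrite !mxE exchange_big /=; apply: eq_bigr => j _.
rewrite !mxE mulr_suml; apply: eq_bigr => i _; by rewrite /adj !mxE.
Qed.

Lemma Pi_psd p q A B : 0 <= 1 - A * conjc A -> 0 <= 1 - B * conjc B -> psd (Pi p q A B).
Proof.
move=> hA hB; split.
  apply/matrixP => i j; rewrite /adj !mxE.
  case: i => [[|[|[|[|//]]]] ?]; case: j => [[|[|[|[|//]]]] ?] /=;
   rewrite ?(cjM, conjcK, conjc_real) //; apply/eqP; rewrite eq_complex /=; apply/andP; split; apply/eqP; ring.
move=> v; rewrite qfE !sum4 !mxE !inordK //=.
set z0 := v (inord 0) 0; set z1 := v (inord 1) 0; set z2 := v (inord 2) 0; set z3 := v (inord 3) 0.
set P := p%:C; set Q := q%:C.
pose w := P * z0 + Q * conjc A * z1 + Q * conjc B * z2 + P * conjc A * conjc B * z3.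
pose w1 := Q * z1 + P * conjc B * z3.
pose w2 := Q * z2 + P * conjc A * z3.
have cP : conjc P = P by rewrite conjc_real.
have cQ : conjc Q = Q by rewrite conjc_real.
have ew : conjc w = P * conjc z0 + Q * A * conjc z1 + Q * B * conjc z2 + P * A * B * conjc z3.
  by rewrite /w !(cjD, cjM) !conjcK cP cQ.
have ew1 : conjc w1 = Q * conjc z1 + P * B * conjc z3 by rewrite /w1 !(cjD, cjM) !conjcK cP cQ.
have ew2 : conjc w2 = Q * conjc z2 + P * A * conjc z3 by rewrite /w2 !(cjD, cjM) !conjcK cP cQ.
have -> : conjc z0 * (P * P) * z0 + conjc z0 * (P * Q * conjc A) * z1 + conjc z0 * (P * Q * conjc B) * z2 + conjc z0 * (P * P * conjc A * conjc B) * z3 +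
  (conjc z1 * (P * Q * A) * z0 + conjc z1 * (Q * Q) * z1 + conjc z1 * (Q * Q * A * conjc B) * z2 + conjc z1 * (P * Q * conjc B) * z3) +
  (conjc z2 * (P * Q * B) * z0 + conjc z2 * (Q * Q * conjc A * B) * z1 + conjc z2 * (Q * Q) * z2 + conjc z2 * (P * Q * conjc A) * z3) +
  (conjc z3 * (P * P * A * B) * z0 + conjc z3 * (P * Q * B) * z1 + conjc z3 * (P * Q * A) * z2 + conjc z3 * (P * P) * z3)
  = w * conjc w + (1 - A * conjc A) * (w1 * conjc w1 + P * P * (1 - B * conjc B) * (z3 * conjc z3)) + (1 - B * conjc B) * (w2 * conjc w2).
  rewrite ew ew1 ew2 /w /w1 /w2; ring.
have hP : 0 <= P * P by rewrite /P -rmorphM ler0c -expr2 sqr_ge0.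
have hz3 : 0 <= z3 * conjc z3 by apply: mulcJ_ge0.
apply: addr_ge0; [apply: addr_ge0|].
- exact: mulcJ_ge0.
- apply: mulr_ge0 => //; apply: addr_ge0; first exact: mulcJ_ge0.
  by apply: mulr_ge0 => //; apply: mulr_ge0.
- by apply: mulr_ge0 => //; apply: mulcJ_ge0.
Qed.
Lemma ord2 (i : 'I_2) : i = inord 0 \/ i = inord 1.
Proof.
case: i => [[|[|//]] h]; [left|right]; apply/val_inj; by rewrite /= inordK.
Qed.

Section Ent.
Variables (p q : R) (A B : C).
Local Notation PI := (Pi p q A B).
Lemma P00 : PI (inord 0) (inord 0) = p%:C * p%:C. Proof. by rewrite mxE !inordK. Qed.
Lemma P11 : PI (inord 1) (inord 1) = q%:C * q%:C. Proof. by rewrite mxE !inordK. Qed.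
Lemma P22 : PI (inord 2) (inord 2) = q%:C * q%:C. Proof. by rewrite mxE !inordK. Qed.
Lemma P33 : PI (inord 3) (inord 3) = p%:C * p%:C. Proof. by rewrite mxE !inordK. Qed.
Lemma P01 : PI (inord 0) (inord 1) = p%:C * q%:C * conjc A. Proof. by rewrite mxE !inordK. Qed.
Lemma P23 : PI (inord 2) (inord 3) = p%:C * q%:C * conjc A. Proof. by rewrite mxE !inordK. Qed.
Lemma P10 : PI (inord 1) (inord 0) = p%:C * q%:C * A. Proof. by rewrite mxE !inordK. Qed.
Lemma P32 : PI (inord 3) (inord 2) = p%:C * q%:C * A. Proof. by rewrite mxE !inordK. Qed.
Lemma P02 : PI (inord 0) (inord 2) = p%:C * q%:C * conjc B. Proof. by rewrite mxE !inordK. Qed.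
Lemma P13 : PI (inord 1) (inord 3) = p%:C * q%:C * conjc B. Proof. by rewrite mxE !inordK. Qed.
Lemma P20 : PI (inord 2) (inord 0) = p%:C * q%:C * B. Proof. by rewrite mxE !inordK. Qed.
Lemma P31 : PI (inord 3) (inord 1) = p%:C * q%:C * B. Proof. by rewrite mxE !inordK. Qed.
End Ent.

Lemma divM_eq (M a c : R) : 0 <= M -> a ^+ 2 <= M ^+ 2 * c -> M * (a / M) = a.
Proof.
move=> hM h; have [M00|nz] := eqVneq M 0.
  rewrite M00 expr0n /= mul0r in h; rewrite M00 mul0r; apply/eqP; by rewrite eq_sym -sqrf_eq0 eq_le h sqr_ge0.
by rewrite mulrC divfK.
Qed.

Lemma ub (r1 r2 : 'rV[R]_3) (M : R) : cz r1 = 0 -> cz r2 = 0 -> 0 <= M -> M <= 1 ->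
  cx r1 ^+ 2 + cy r1 ^+ 2 <= M ^+ 2 -> cx r2 ^+ 2 + cy r2 ^+ 2 <= M ^+ 2 ->
  exists P, coupling (bloch r1) (bloch r2) P /\ \tr (P *m Cz2 R) = (2 - 2 * Num.sqrt (1 - M ^+ 2))%:C.
Proof.
move=> z1 z2 M0 M1 n1 n2.
set S := Num.sqrt _.
have S0 : 0 <= S by rewrite sqrtr_ge0.
have S2 : S ^+ 2 = 1 - M ^+ 2 by rewrite sqr_sqrtr // subr_ge0 expr_le1.
have S1 : S <= 1 by nra.
set p := Num.sqrt ((1 + S) / 4); set q := Num.sqrt ((1 - S) / 4).
have hp : p * p = (1 + S) / 4 by rewrite -expr2 sqr_sqrtr // divr_ge0 // addr_ge0.
have hq : q * q = (1 - S) / 4 by rewrite -expr2 sqr_sqrtr // divr_ge0 // subr_ge0.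
have hpq : p * q = M / 4.
  rewrite -sqrtrM; last by rewrite divr_ge0 // addr_ge0.
  have -> : (1 + S) / 4 * ((1 - S) / 4) = (M / 4) ^+ 2.
    have : (1 + S) / 4 * ((1 - S) / 4) = (1 - S ^+ 2) / 16 by field.
    by move=> ->; rewrite S2; field.
  by rewrite sqrtr_sqr ger0_norm // divr_ge0.
set a1 := cx r1 / M; set b1 := cy r1 / M; set a2 := cx r2 / M; set b2 := cy r2 / M.
have ha1 : M * a1 = cx r1 by apply: (divM_eq _ _ 1) => //; rewrite mulr1; nra.
have hb1 : M * b1 = cy r1 by apply: (divM_eq _ _ 1) => //; rewrite mulr1; nra.
have ha2 : M * a2 = cx r2 by apply: (divM_eq _ _ 1) => //; rewrite mulr1; nra.
have hb2 : M * b2 = cy r2 by apply: (divM_eq _ _ 1) => //; rewrite mulr1; nra.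
have nA : a1 ^+ 2 + b1 ^+ 2 <= 1.
  have [M00|Mp] := eqVneq M 0.
    by rewrite /a1 /b1 M00 invr0 !mulr0 expr0n /= addr0 ler01.
  have Mpos : 0 < M by rewrite lt0r Mp.
  rewrite -ha1 -hb1 [(M * a1) ^+ 2]exprMn [(M * b1) ^+ 2]exprMn in n1.
  have hM2 : 0 < M ^+ 2 by rewrite exprn_gt0.
  have h : M ^+ 2 * (a1 ^+ 2 + b1 ^+ 2 - 1) <= 0 by rewrite mulrBr mulr1 mulrDr; lra.
  by move: h; rewrite pmulr_rle0 // subr_le0.
have nB : a2 ^+ 2 + b2 ^+ 2 <= 1.
  have [M00|Mp] := eqVneq M 0.
    by rewrite /a2 /b2 M00 invr0 !mulr0 expr0n /= addr0 ler01.
  have Mpos : 0 < M by rewrite lt0r Mp.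
  rewrite -ha2 -hb2 [(M * a2) ^+ 2]exprMn [(M * b2) ^+ 2]exprMn in n2.
  have hM2 : 0 < M ^+ 2 by rewrite exprn_gt0.
  have h : M ^+ 2 * (a2 ^+ 2 + b2 ^+ 2 - 1) <= 0 by rewrite mulrBr mulr1 mulrDr; lra.
  by move: h; rewrite pmulr_rle0 // subr_le0.
pose A := a1 +i* (- b1); pose B := a2 +i* b2.
have hA : 0 <= 1 - A * conjc A.
  have -> : 1 - A * conjc A = (1 - (a1 ^+ 2 + b1 ^+ 2))%:C.
    by apply/eqP; rewrite eq_complex /=; apply/andP; split; apply/eqP; ring.
  by rewrite ler0c subr_ge0.
have hB : 0 <= 1 - B * conjc B.
  have -> : 1 - B * conjc B = (1 - (a2 ^+ 2 + b2 ^+ 2))%:C.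
    by apply/eqP; rewrite eq_complex /=; apply/andP; split; apply/eqP; ring.
  by rewrite ler0c subr_ge0.
exists (Pi p q A B); split; last first.
  rewrite costE P11 P22.
  apply/eqP; rewrite eq_complex /=; apply/andP; split; apply/eqP; last by ring.
  have e : 2 - 2 * S = 8 * (q * q) by rewrite hq; field.
  by rewrite e; ring.
have hpp : p%:C * p%:C = ((1 + S) / 4)%:C by rewrite -rmorphM hp.
have hqq : q%:C * q%:C = ((1 - S) / 4)%:C by rewrite -rmorphM hq.
have hpqC : p%:C * q%:C = (M / 4)%:C by rewrite -rmorphM hpq.
split; [split; [exact: Pi_psd|] | split].
- rewrite trE P00 P11 P22 P33 hpp hqq -!complexr0.
  by simpc; apply/eqP; rewrite eq_complex /=; apply/andP; split; apply/eqP; field.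
- apply/matrixP => i j; case: (ord2 i) => ->; case: (ord2 j) => ->;
  rewrite /ptr_Hdual mxE sum2 ?t00 ?t01 ?t10 ?t11 blochE //= ?z2 ?P00 ?P11 ?P22 ?P33 ?P02 ?P13 ?P20 ?P31 ?hpp ?hqq ?hpqC -?complexr0;
  simpc; apply/eqP; rewrite eq_complex /=; apply/andP; split; apply/eqP;
  rewrite -?ha2 -?hb2; by field.
apply/matrixP => i j; rewrite trE2; case: (ord2 i) => ->; case: (ord2 j) => ->;
  rewrite /ptr_H mxE sum2 ?t00 ?t01 ?t10 ?t11 blochE //= ?z1 ?P00 ?P11 ?P22 ?P33 ?P01 ?P23 ?P10 ?P32 ?hpp ?hqq ?hpqC -?complexr0;
  simpc; apply/eqP; rewrite eq_complex /=; apply/andP; split; apply/eqP;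
  rewrite -?ha1 -?hb1; by field.
Qed.
End U.


Section F.
Variable R : realType.
Local Open Scope complex_scope.

Lemma normE (r : 'rV[R]_3) : cz r = 0 -> norm3 r = Num.sqrt (cx r ^+ 2 + cy r ^+ 2).
Proof.
move=> z; rewrite /norm3 /dot3 sum3; congr Num.sqrt.
rewrite /cx /cy /cz in z *; rewrite z; ring.
Qed.

Lemma dotez (r : 'rV[R]_3) : dot3 r (ez R) = cz r.
Proof. rewrite /dot3 sum3 !mxE /= !inordK //= /cz; ring. Qed.

Lemma D2val (r1 r2 : 'rV[R]_3) : cz r1 = 0 -> cz r2 = 0 -> norm3 r1 <= 1 -> norm3 r2 <= 1 ->
  D2z (bloch r1) (bloch r2) = 2 - 2 * Num.sqrt (1 - (Num.max (norm3 r1) (norm3 r2)) ^+ 2).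
Proof.
move=> z1 z2 h1 h2.
have s1 : norm3 r1 ^+ 2 = cx r1 ^+ 2 + cy r1 ^+ 2 by rewrite normE // sqr_sqrtr // addr_ge0 // sqr_ge0.
have s2 : norm3 r2 ^+ 2 = cx r2 ^+ 2 + cy r2 ^+ 2 by rewrite normE // sqr_sqrtr // addr_ge0 // sqr_ge0.
have g1 : 0 <= norm3 r1 by rewrite /norm3 sqrtr_ge0.
have g2 : 0 <= norm3 r2 by rewrite /norm3 sqrtr_ge0.
have q1 : cx r1 ^+ 2 + cy r1 ^+ 2 <= 1 by rewrite -s1 expr_le1.
have q2 : cx r2 ^+ 2 + cy r2 ^+ 2 <= 1 by rewrite -s2 expr_le1.
set M := Num.max _ _.
have hM : M = norm3 r1 /\ norm3 r2 <= norm3 r1 \/ M = norm3 r2 /\ norm3 r1 <= norm3 r2.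
  have [le|lt] := leP (norm3 r1) (norm3 r2).
    by right; rewrite /M max_r.
  by left; rewrite /M max_l // ltW.
have M0 : 0 <= M by case: hM => [[-> _]|[-> _]].
have M1 : M <= 1 by case: hM => [[-> _]|[-> _]].
have c1 : cx r1 ^+ 2 + cy r1 ^+ 2 <= M ^+ 2.
  rewrite -s1; case: hM => [[-> _]|[-> le]] //; by rewrite ler_pXn2r // nnegrE.
have c2 : cx r2 ^+ 2 + cy r2 ^+ 2 <= M ^+ 2.
  rewrite -s2; case: hM => [[-> le]|[-> _]] //; by rewrite ler_pXn2r // nnegrE.
have [P [HP HT]] := ub _ _ _ _ z1 z2 M0 M1 c1 c2.
have lbd : lbound [set x : R | exists P : 'M[R[i]]_4,
         coupling (bloch r1) (bloch r2) P /\ \tr (P *m Cz2 R) = x%:C] (2 - 2 * Num.sqrt (1 - M ^+ 2)).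
  move=> y [Q [HQ HQT]]; have [l1 l2] := lb _ _ _ _ _ z1 z2 HQ HQT q1 q2.
  by case: hM => [[-> _]|[-> _]]; rewrite ?s1 ?s2.
apply/eqP; rewrite eq_le; apply/andP; split.
  rewrite /D2z; apply: (@ge_inf R _ _ (2 - 2 * Num.sqrt (1 - M ^+ 2))).
    by exists (2 - 2 * Num.sqrt (1 - M ^+ 2)).
  by exists P.
apply: lb_le_inf => //; by exists (2 - 2 * Num.sqrt (1 - M ^+ 2)), P.
Qed.
End F.


End Aux.
Import Aux.

Theorem corollary3p7 (R : realType) (r1 r2 : 'rV[R]_3) :
  norm3 r1 <= 1 -> norm3 r2 <= 1 ->
  dot3 r1 (ez R) = 0 -> dot3 r2 (ez R) = 0 ->
  dz2 (bloch r1) (bloch r2) ^+ 2 =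
    Num.sqrt (1 - Num.min (norm3 r1) (norm3 r2) ^+ 2)
    - Num.sqrt (1 - Num.max (norm3 r1) (norm3 r2) ^+ 2).
Proof.
rewrite !dotez => h1 h2 z1 z2.
rewrite /dz2 (D2val _ _ _ z1 z2 h1 h2) (D2val _ _ _ z1 z1 h1 h1) (D2val _ _ _ z2 z2 h2 h2) !maxxx.
have g1 : 0 <= norm3 r1 by rewrite /norm3 sqrtr_ge0.
have g2 : 0 <= norm3 r2 by rewrite /norm3 sqrtr_ge0.
have [le|lt] := leP (norm3 r1) (norm3 r2).
  have : Num.sqrt (1 - norm3 r2 ^+ 2) <= Num.sqrt (1 - norm3 r1 ^+ 2).
    by rewrite ler_sqrt ?lerB // ?subr_ge0 ?expr_le1 // ler_pXn2r // nnegrE.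
  move=> hs; rewrite sqr_sqrtr; first by field.
  lra.

have : Num.sqrt (1 - norm3 r1 ^+ 2) <= Num.sqrt (1 - norm3 r2 ^+ 2).
  by rewrite ler_sqrt ?lerB // ?subr_ge0 ?expr_le1 // ler_pXn2r ?nnegrE // ltW.
move=> hs; rewrite sqr_sqrtr; first by field.
lra.
Qed.
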